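(* Let $G$ be a graph on $n$ vertices with at least two vertex-disjoint edges. If $k \ge \min\{n-1, \Gamma(G)+\gamma(G)\}$, then $D_k(G)$ is connected.
   Context: All graphs are finite and simple. A set $S \subseteq V(G)$ is a dominating set of $G$ if every vertex of $V(G)\setminus S$ is adjacent to a vertex of $S$; it is a minimal dominating set if no proper subset of it is a dominating set. $\gamma(G)$ is the minimum cardinality of a dominating set of $G$, and $\Gamma(G)$ is the maximum cardinality of a minimal dominating set of $G$. For an integer $k \ge \gamma(G)$, the $k$-dominating graph $D_k(G)$ is the graph whose vertices are the dominating sets of $G$ of cardinality at most $k$, with two such sets $A,B$ adjacent if and only if their symmetric difference $(A\setminus B)\cup(B\setminus A)$ consists of exactly one vertex of $G$. *)

(* Defs.v *)
From mathcomp Require Import all_boot.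
Set Implicit Arguments. Unset Strict Implicit. Unset Printing Implicit Defensive.

Definition simple_graph (T : finType) (e : rel T) : Prop :=
  symmetric e /\ irreflexive e.

Definition dominating (T : finType) (e : rel T) (S : {set T}) : bool :=
  [forall v, (v \notin S) ==> [exists u in S, e v u]].

Definition minimal_dominating (T : finType) (e : rel T) (S : {set T}) : bool :=
  dominating e S && [forall S' : {set T}, (S' \proper S) ==> ~~ dominating e S'].

(* gamma(G): minimum cardinality of a dominating set (setT always dominates). *)
Definition gamma (T : finType) (e : rel T) : nat :=
  \big[minn/#|T|]_(S : {set T} | dominating e S) #|S|.

Definition Gamma (T : finType) (e : rel T) : nat :=
  \max_(S : {set T} | minimal_dominating e S) #|S|.

Definition Dk_vertex (T : finType) (e : rel T) (k : nat) (A : {set T}) : bool :=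
  dominating e A && (#|A| <= k).

Definition Dk_adj (T : finType) (e : rel T) (k : nat) : rel {set T} :=
  fun A B => [&& Dk_vertex e k A, Dk_vertex e k B & #|(A :\: B) :|: (B :\: A)| == 1].

Definition Dk_connected (T : finType) (e : rel T) (k : nat) : Prop :=
  forall A B : {set T}, Dk_vertex e k A -> Dk_vertex e k B ->
    exists p : seq {set T}, path (Dk_adj e k) A p /\ last A p = B.

Definition two_disjoint_edges (T : finType) (e : rel T) : Prop :=
  exists a b c d : T, [/\ e a b, e c d & uniq [:: a; b; c; d]].

(* Main.v *)
Require Import Defs.
From mathcomp Require Import all_boot.

Lemma dom_sup (T : finType) (e : rel T) (A B : {set T}) :
  A \subset B -> dominating e A -> dominating e B.
Proof.
move=> sAB /forallP dA; apply/forallP => v; apply/implyP => vB.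
have vA : v \notin A by apply: contra vB => /(subsetP sAB).
have /existsP [u /andP [uA evu]] := implyP (dA v) vA.
by apply/existsP; exists u; rewrite (subsetP sAB).
Qed.

Lemma Dk_adj_sym (T : finType) (e : rel T) k : symmetric (Dk_adj e k).
Proof.
move=> A B; rewrite /Dk_adj setUC.
by case: (Dk_vertex e k A); case: (Dk_vertex e k B).
Qed.

Lemma grow (T : finType) (e : rel T) k (A B : {set T}) :
  A \subset B -> dominating e A -> #|B| <= k -> connect (Dk_adj e k) A B.
Proof.
move Hn: #|B :\: A| => n; elim: n A Hn => [|n IH] A Hn sAB dA cB.
  have : B :\: A == set0 by rewrite -cards_eq0 Hn.
  rewrite setD_eq0 => sBA.
  by have -> : A = B by apply/eqP; rewrite eqEsubset sAB sBA.
have [x xBA] : exists x, x \in B :\: A.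
  apply/set0Pn; by rewrite -cards_eq0 Hn.
move: (xBA); rewrite inE => /andP [xA xB].
have sA'B : x |: A \subset B by rewrite subUset sub1set xB sAB.
have dA' : dominating e (x |: A) by apply: dom_sup dA; apply: subsetUr.
apply: (connect_trans (y := x |: A)); last first.
  apply: IH => //.
  have : #|B :\: A| = #|B :\: (x |: A)|.+1.
    rewrite (cardsD1 x (B :\: A)) xBA add1n; congr _.+1.
    by apply: eq_card => y; rewrite !inE; case: (y == x); rewrite ?andbF ?andbT // negbK.
  by rewrite Hn => -[].
apply: connect1; rewrite /Dk_adj /Dk_vertex dA dA' /=.
rewrite (leq_trans (subset_leq_card sAB)) //= (leq_trans (subset_leq_card sA'B)) //=.
have -> : (A :\: (x |: A)) :|: ((x |: A) :\: A) = [set x].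
  apply/setP => y; rewrite !inE; case: (eqVneq y x) => [->|]; first by rewrite (negPf xA).
  move=> _; by case: (y \in A).
by rewrite cards1.
Qed.

Lemma shrink (T : finType) (e : rel T) k (A B : {set T}) :
  A \subset B -> dominating e A -> #|B| <= k -> connect (Dk_adj e k) B A.
Proof.
move=> *; rewrite (sym_connect_sym (@Dk_adj_sym T e k)); exact: grow.
Qed.

Lemma min_sub (T : finType) (e : rel T) (A : {set T}) :
  dominating e A -> exists2 A' : {set T}, A' \subset A & minimal_dominating e A'.
Proof.
move=> dA.
have P0 : [pred S : {set T} | dominating e S && (S \subset A)] A by rewrite /= dA subxx.
case: (arg_minnP (fun S : {set T} => #|S|) P0) => M /andP [dM sMA] Hmin.
exists M => //; rewrite /minimal_dominating dM /=.
apply/forallP => S; apply/implyP => pS; apply/negP => dS.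
have := Hmin S; rewrite /= dS (subset_trans (proper_sub pS) sMA) => /(_ isT).
by rewrite leqNgt proper_card.
Qed.

Lemma gamma_att (T : finType) (e : rel T) :
  exists2 D, dominating e D & #|D| <= gamma e.
Proof.
have dT : dominating e [set: T].
  by apply/forallP => v; rewrite inE.
case: (@arg_minnP _ _ (dominating e) (fun S : {set T} => #|S|) dT) => D dD Hmin.
exists D => //; rewrite /gamma.
apply: (big_ind (fun m => #|D| <= m)).
- by apply: max_card.
- by move=> x y hx hy; rewrite leq_min hx hy.
- by move=> S dS; apply: Hmin.
Qed.

Lemma min_le_Gamma (T : finType) (e : rel T) (A : {set T}) :
  minimal_dominating e A -> #|A| <= Gamma e.
Proof. by move=> mA; rewrite /Gamma; apply: (leq_bigmax_cond (P := minimal_dominating e)). Qed.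

Lemma case1 (T : finType) (e : rel T) k (D A : {set T}) :
  dominating e D -> #|D| <= gamma e -> Gamma e + gamma e <= k ->
  Dk_vertex e k A -> connect (Dk_adj e k) A D.
Proof.
move=> dD cD hk /andP [dA cA].
case: (@min_sub _ _ _ dA) => A' sA' mA'.
have dA' : dominating e A' by case/andP: mA'.
have cU : #|A' :|: D| <= k.
  apply: leq_trans hk; apply: leq_trans (leq_add (@min_le_Gamma _ _ _ mA') cD).
  by rewrite cardsU leq_subr.
apply: (connect_trans (y := A')); first exact: shrink.
apply: (connect_trans (y := A' :|: D)); first by apply: grow => //; apply: subsetUl.
by apply: shrink => //; apply: subsetUr.
Qed.

Lemma domC1 (T : finType) (e : rel T) (u w : T) :
  e u w -> w != u -> dominating e [set~ u].
Proof.
move=> euw wu; apply/forallP => x; apply/implyP; rewrite !inE negbK => /eqP ->.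
by apply/existsP; exists w; rewrite !inE wu.
Qed.

Lemma Mlem (T : finType) (e : rel T) k (u v u1 v1 : T) :
  u != v -> e u u1 -> u1 != u -> u1 != v -> e v v1 -> v1 != u -> v1 != v ->
  #|T|.-1 <= k -> connect (Dk_adj e k) [set~ u] [set~ v].
Proof.
move=> uv eu u1u u1v ev v1u v1v hk.
set S := [set~ u] :&: [set~ v].
have dS : dominating e S.
  apply/forallP => x; apply/implyP; rewrite !inE negb_and !negbK => /orP [] /eqP ->.
    by apply/existsP; exists u1; rewrite !inE u1u u1v.
  by apply/existsP; exists v1; rewrite !inE v1u v1v.
apply: (connect_trans (y := S)).
  by apply: shrink => //; [apply: subsetIl | rewrite cardsC1].
by apply: grow => //; [apply: subsetIr | rewrite cardsC1].
Qed.

Lemma edge_avoid (T : finType) (e : rel T) (u v : T) :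
  simple_graph e -> two_disjoint_edges e -> u != v -> (forall w, e u w -> w = v) ->
  exists x y, [/\ e x y, x != u, x != v, y != u & y != v].
Proof.
move=> [se ie] [a [b [c [d [eab ecd]]]]].
rewrite /= !inE !negb_or => /andP [/and3P [ab ac ad] /andP [/andP [bc bd] /andP [cd _]]].
move=> uv hu.
have Hcd : c != u -> c != v -> d != u -> d != v -> exists x y, [/\ e x y, x != u, x != v, y != u & y != v].
  by move=> *; exists c, d.
case: (eqVneq a u) => [au|au].
  subst a; have bv := hu _ eab; subst b.
  by apply: Hcd; rewrite 1?eq_sym.
case: (eqVneq b u) => [bu|bu].
  subst b; have av : a = v by apply: hu; rewrite se.
  subst a; by apply: Hcd; rewrite 1?eq_sym.
have cU : a = v \/ b = v -> c != u /\ d != u.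
  move=> hab; split; apply/eqP => cu.
    subst c; move: (hu _ ecd) => dv; subst d.
    by case: hab => ?; subst; rewrite eqxx in ad bd.
  subst d; have cv : c = v by apply: hu; rewrite se.
  by subst c; case: hab => ?; subst; rewrite eqxx in ac bc.
case: (eqVneq a v) => [av|av].
  have [c1 d1] := cU (or_introl av).
  subst a; by apply: Hcd; rewrite // eq_sym.
case: (eqVneq b v) => [bv|bv].
  have [c1 d1] := cU (or_intror bv).
  subst b; by apply: Hcd; rewrite // eq_sym.
by exists a, b.
Qed.

Lemma Kasym (T : finType) (e : rel T) k (u v : T) :
  simple_graph e -> two_disjoint_edges e -> u != v -> e u v ->
  (forall w, e u w -> w = v) -> #|T|.-1 <= k ->
  connect (Dk_adj e k) [set~ u] [set~ v].
Proof.
move=> sg tde uv euv hu hk.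
have [x [y [exy xu xv yu yv]]] := @edge_avoid _ _ _ _ sg tde uv hu.
case: sg => se ie.
have yx : y != x by apply/eqP => yx; subst y; rewrite ie in exy.
apply: (connect_trans (y := [set~ x])).
  apply: (@Mlem _ _ _ u x v y) => //; by rewrite 1?eq_sym.
apply: (@Mlem _ _ _ x v y u) => //; by rewrite 1?eq_sym // se.
Qed.

Lemma Klem (T : finType) (e : rel T) k (u v u' v' : T) :
  simple_graph e -> two_disjoint_edges e -> e u u' -> e v v' -> #|T|.-1 <= k ->
  connect (Dk_adj e k) [set~ u] [set~ v].
Proof.
move=> sg tde eu ev hk.
case: (eqVneq u v) => [<-|uv]; first exact: connect0.
have [se ie] := sg.
have nb : forall w z, e w z -> z != w by move=> w z ewz; apply/eqP => zw; subst; rewrite ie in ewz.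
case: (boolP [exists w, e u w && (w != v)]) => [/existsP [u1 /andP [eu1 u1v]]|/existsPn hu].
  case: (boolP [exists w, e v w && (w != u)]) => [/existsP [v1 /andP [ev1 v1u]]|/existsPn hv].
    by apply: (@Mlem _ _ _ u v u1 v1) => //; apply: nb.
  have hv' : forall w, e v w -> w = u by move=> w evw; move: (hv w); rewrite evw negbK => /eqP.
  rewrite (sym_connect_sym (@Dk_adj_sym T e k)).
  apply: Kasym => //; first by rewrite eq_sym.
  by have := ev; rewrite (hv' _ ev).
have hu' : forall w, e u w -> w = v by move=> w euw; move: (hu w); rewrite euw negbK => /eqP.
apply: Kasym => //.
by have := eu; rewrite (hu' _ eu).
Qed.

Lemma toC1 (T : finType) (e : rel T) k (A : {set T}) :
  simple_graph e -> two_disjoint_edges e -> #|T|.-1 <= k -> Dk_vertex e k A ->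
  exists u u', e u u' /\ connect (Dk_adj e k) A [set~ u].
Proof.
move=> [se ie] tde hk /andP [dA cA].
have nb : forall w z, e w z -> z != w by move=> w z ewz; apply/eqP => zw; subst; rewrite ie in ewz.
case: (boolP [exists u, u \notin A]) => [/existsP [u uA]|/existsPn hA].
  have /existsP [w /andP [wA euw]] := implyP (forallP dA u) uA.
  exists u, w; split => //; apply: grow => //; last by rewrite cardsC1.
  apply/subsetP => x xA; rewrite !inE; apply/eqP => xu; subst x; by rewrite xA in uA.
case: tde => a [b [c [d [eab _ _]]]].
exists a, b; split => //; apply: shrink => //.
- by apply/subsetP => x _; move: (hA x); rewrite negbK.
- by apply: (@domC1 _ _ a b) => //; apply: nb.
Qed.

Theorem theorem5 (T : finType) (e : rel T) (k : nat) :
  simple_graph e ->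
  two_disjoint_edges e ->
  gamma e <= k ->
  minn (#|T|).-1 (Gamma e + gamma e) <= k ->
  Dk_connected e k.
Proof.
move=> sg tde _ hmin A B vA vB.
suff: connect (Dk_adj e k) A B by case/connectP => p hp ->; exists p.
have csym := sym_connect_sym (@Dk_adj_sym T e k).
case: (leqP (Gamma e + gamma e) k) => hk.
  have [D dD cD] := @gamma_att T e.
  apply: (connect_trans (y := D)); first exact: (@case1 T e k D A dD cD hk vA).
  by rewrite csym; apply: (@case1 T e k D B dD cD hk vB).
have hn : #|T|.-1 <= k.
  by move: hmin; rewrite geq_min => /orP [] // h; move: (leq_ltn_trans h hk); rewrite ltnn.
have [u [u' [eu cu]]] := @toC1 T e k A sg tde hn vA.
have [v [v' [ev cv]]] := @toC1 T e k B sg tde hn vB.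
apply: (connect_trans cu); apply: (connect_trans (@Klem T e k u v u' v' sg tde eu ev hn)).
by rewrite csym.
Qed.
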